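(* Let $C$ be a double category and $\epsilon_C:\gamma C\to C$ the inclusion of its globularily generated piece. Then for every globularily generated double category $D$ and every double functor $F:D\to C$ there exists a unique double functor $\tilde F:D\to\gamma C$ with $\epsilon_C\circ\tilde F=F$. This universal property characterizes $\gamma C$ (together with $\epsilon_C$) up to double isomorphism.
   Context: Double categories are not assumed strict; a 2-morphism is globular if source and target are identity vertical morphisms; unitor/associator components are globular. A sub-double category $D\subseteq C$ has $D_0\subseteq C_0$, $D_1\subseteq C_1$ subcategories closed under source, target, horizontal identity, horizontal composition and the constraint isomorphisms; it is complete if it has the same objects, vertical morphisms and horizontal morphisms as $C$. The globularily generated piece $\gamma C$ is the intersection of all complete sub-double categories of $C$ containing all globular 2-morphisms of $C$. A double category $D$ is globularily generated if $\gamma D=D$. *)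

(* Defs.v *)
(* Pseudo (= weak, Grandis-Pare) double categories, encoded
   "algebraically": every kind of arrow forms a type equipped with source /
   target maps, and the partial compositions take a proof of composability.
   All compositions are written in DIAGRAMMATIC order:
     vcomp f g e  = "f then g"  (vertical morphisms, category C_0)
     ccomp a b e  = "a then b"  (2-morphisms, vertical composition in C_1)
     hcomp h k e  = "h then k"  (horizontal morphisms, hsrc/htgt)
     chcomp a b e = "a then b"  (horizontal composition of 2-morphisms).
   A 2-morphism a has vertical source/target (horizontal morphisms)
   cdom a / ccod a (the source and target in C_1) and horizontal
   source/target (vertical morphisms) csrc a / ctgt a (the functors s,t). *)

Record DC : Type := mkDC {
  Ob : Type; VM : Type; HM : Type; Cell : Type;
  vdom : VM -> Ob; vcod : VM -> Ob; vid : Ob -> VM;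
  vcomp : forall f g : VM, vcod f = vdom g -> VM;
  cdom : Cell -> HM; ccod : Cell -> HM; cid : HM -> Cell;
  ccomp : forall a b : Cell, ccod a = cdom b -> Cell;
  hsrc : HM -> Ob; htgt : HM -> Ob; csrc : Cell -> VM; ctgt : Cell -> VM;
  hunit : Ob -> HM; cunit : VM -> Cell;
  hcomp : forall h k : HM, htgt h = hsrc k -> HM;
  chcomp : forall a b : Cell, ctgt a = csrc b -> Cell;
  assoc : forall h k l : HM, htgt h = hsrc k -> htgt k = hsrc l -> Cell;
  assoc_inv : forall h k l : HM, htgt h = hsrc k -> htgt k = hsrc l -> Cell;
  lunit : HM -> Cell; lunit_inv : HM -> Cell;
  runit : HM -> Cell; runit_inv : HM -> Cell }.

Arguments vdom {_} _. Arguments vcod {_} _. Arguments vid {_} _.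
Arguments vcomp {_} _ _ _. Arguments cdom {_} _. Arguments ccod {_} _.
Arguments cid {_} _. Arguments ccomp {_} _ _ _. Arguments hsrc {_} _.
Arguments htgt {_} _. Arguments csrc {_} _. Arguments ctgt {_} _.
Arguments hunit {_} _. Arguments cunit {_} _. Arguments hcomp {_} _ _ _.
Arguments chcomp {_} _ _ _. Arguments assoc {_} _ _ _ _ _.
Arguments assoc_inv {_} _ _ _ _ _. Arguments lunit {_} _.
Arguments lunit_inv {_} _. Arguments runit {_} _. Arguments runit_inv {_} _.

Record isDC (C : DC) : Prop := {
  vid_dom : forall x : Ob C, vdom (vid x) = x;
  vid_cod : forall x : Ob C, vcod (vid x) = x;
  vcomp_dom : forall (f g : VM C) (e : vcod f = vdom g), vdom (vcomp f g e) = vdom f;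
  vcomp_cod : forall (f g : VM C) (e : vcod f = vdom g), vcod (vcomp f g e) = vcod g;
  vcomp_idl : forall (f : VM C) (e : vcod (vid (vdom f)) = vdom f), vcomp (vid (vdom f)) f e = f;
  vcomp_idr : forall (f : VM C) (e : vcod f = vdom (vid (vcod f))), vcomp f (vid (vcod f)) e = f;
  vcomp_assoc : forall (f g h : VM C) (e1 : vcod f = vdom g) (e2 : vcod (vcomp f g e1) = vdom h)
      (e3 : vcod g = vdom h) (e4 : vcod f = vdom (vcomp g h e3)),
      vcomp (vcomp f g e1) h e2 = vcomp f (vcomp g h e3) e4;
  cid_dom : forall h : HM C, cdom (cid h) = h;
  cid_cod : forall h : HM C, ccod (cid h) = h;
  ccomp_dom : forall (a b : Cell C) (e : ccod a = cdom b), cdom (ccomp a b e) = cdom a;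
  ccomp_cod : forall (a b : Cell C) (e : ccod a = cdom b), ccod (ccomp a b e) = ccod b;
  ccomp_idl : forall (a : Cell C) (e : ccod (cid (cdom a)) = cdom a), ccomp (cid (cdom a)) a e = a;
  ccomp_idr : forall (a : Cell C) (e : ccod a = cdom (cid (ccod a))), ccomp a (cid (ccod a)) e = a;
  ccomp_assoc : forall (a b c : Cell C) (e1 : ccod a = cdom b) (e2 : ccod (ccomp a b e1) = cdom c)
      (e3 : ccod b = cdom c) (e4 : ccod a = cdom (ccomp b c e3)),
      ccomp (ccomp a b e1) c e2 = ccomp a (ccomp b c e3) e4;
  csrc_dom : forall a : Cell C, vdom (csrc a) = hsrc (cdom a);
  csrc_cod : forall a : Cell C, vcod (csrc a) = hsrc (ccod a);
  ctgt_dom : forall a : Cell C, vdom (ctgt a) = htgt (cdom a);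
  ctgt_cod : forall a : Cell C, vcod (ctgt a) = htgt (ccod a);
  csrc_id : forall h : HM C, csrc (cid h) = vid (hsrc h);
  ctgt_id : forall h : HM C, ctgt (cid h) = vid (htgt h);
  csrc_comp : forall (a b : Cell C) (e : ccod a = cdom b) (e' : vcod (csrc a) = vdom (csrc b)),
      csrc (ccomp a b e) = vcomp (csrc a) (csrc b) e';
  ctgt_comp : forall (a b : Cell C) (e : ccod a = cdom b) (e' : vcod (ctgt a) = vdom (ctgt b)),
      ctgt (ccomp a b e) = vcomp (ctgt a) (ctgt b) e';
  cunit_dom : forall f : VM C, cdom (cunit f) = hunit (vdom f);
  cunit_cod : forall f : VM C, ccod (cunit f) = hunit (vcod f);
  cunit_id : forall x : Ob C, cunit (vid x) = cid (hunit x);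
  cunit_comp : forall (f g : VM C) (e : vcod f = vdom g) (e' : ccod (cunit f) = cdom (cunit g)),
      cunit (vcomp f g e) = ccomp (cunit f) (cunit g) e';
  hsrc_unit : forall x : Ob C, hsrc (hunit x) = x;
  htgt_unit : forall x : Ob C, htgt (hunit x) = x;
  csrc_unit : forall f : VM C, csrc (cunit f) = f;
  ctgt_unit : forall f : VM C, ctgt (cunit f) = f;
  hsrc_hcomp : forall (h k : HM C) (e : htgt h = hsrc k), hsrc (hcomp h k e) = hsrc h;
  htgt_hcomp : forall (h k : HM C) (e : htgt h = hsrc k), htgt (hcomp h k e) = htgt k;
  csrc_chcomp : forall (a b : Cell C) (e : ctgt a = csrc b), csrc (chcomp a b e) = csrc a;
  ctgt_chcomp : forall (a b : Cell C) (e : ctgt a = csrc b), ctgt (chcomp a b e) = ctgt b;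
  cdom_chcomp : forall (a b : Cell C) (e : ctgt a = csrc b) (e' : htgt (cdom a) = hsrc (cdom b)),
      cdom (chcomp a b e) = hcomp (cdom a) (cdom b) e';
  ccod_chcomp : forall (a b : Cell C) (e : ctgt a = csrc b) (e' : htgt (ccod a) = hsrc (ccod b)),
      ccod (chcomp a b e) = hcomp (ccod a) (ccod b) e';
  chcomp_id : forall (h k : HM C) (e : htgt h = hsrc k) (e' : ctgt (cid h) = csrc (cid k)),
      chcomp (cid h) (cid k) e' = cid (hcomp h k e);
  interchange : forall (a b a' b' : Cell C) (e : ctgt a = csrc b) (e' : ctgt a' = csrc b')
      (ea : ccod a = cdom a') (eb : ccod b = cdom b')
      (e1 : ctgt (ccomp a a' ea) = csrc (ccomp b b' eb))
      (e2 : ccod (chcomp a b e) = cdom (chcomp a' b' e')),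
      chcomp (ccomp a a' ea) (ccomp b b' eb) e1 = ccomp (chcomp a b e) (chcomp a' b' e') e2;
  assoc_dom : forall (h k l : HM C) (p : htgt h = hsrc k) (q : htgt k = hsrc l)
      (p1 : htgt (hcomp h k p) = hsrc l), cdom (assoc h k l p q) = hcomp (hcomp h k p) l p1;
  assoc_cod : forall (h k l : HM C) (p : htgt h = hsrc k) (q : htgt k = hsrc l)
      (q1 : htgt h = hsrc (hcomp k l q)), ccod (assoc h k l p q) = hcomp h (hcomp k l q) q1;
  assoc_src : forall (h k l : HM C) (p : htgt h = hsrc k) (q : htgt k = hsrc l),
      csrc (assoc h k l p q) = vid (hsrc h);
  assoc_tgt : forall (h k l : HM C) (p : htgt h = hsrc k) (q : htgt k = hsrc l),
      ctgt (assoc h k l p q) = vid (htgt l);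
  assoc_inv_dom : forall (h k l : HM C) (p : htgt h = hsrc k) (q : htgt k = hsrc l)
      (q1 : htgt h = hsrc (hcomp k l q)), cdom (assoc_inv h k l p q) = hcomp h (hcomp k l q) q1;
  assoc_inv_cod : forall (h k l : HM C) (p : htgt h = hsrc k) (q : htgt k = hsrc l)
      (p1 : htgt (hcomp h k p) = hsrc l), ccod (assoc_inv h k l p q) = hcomp (hcomp h k p) l p1;
  assoc_inv_src : forall (h k l : HM C) (p : htgt h = hsrc k) (q : htgt k = hsrc l),
      csrc (assoc_inv h k l p q) = vid (hsrc h);
  assoc_inv_tgt : forall (h k l : HM C) (p : htgt h = hsrc k) (q : htgt k = hsrc l),
      ctgt (assoc_inv h k l p q) = vid (htgt l);
  assoc_inv_l : forall (h k l : HM C) (p : htgt h = hsrc k) (q : htgt k = hsrc l)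
      (p1 : htgt (hcomp h k p) = hsrc l)
      (e : ccod (assoc h k l p q) = cdom (assoc_inv h k l p q)),
      ccomp (assoc h k l p q) (assoc_inv h k l p q) e = cid (hcomp (hcomp h k p) l p1);
  assoc_inv_r : forall (h k l : HM C) (p : htgt h = hsrc k) (q : htgt k = hsrc l)
      (q1 : htgt h = hsrc (hcomp k l q))
      (e : ccod (assoc_inv h k l p q) = cdom (assoc h k l p q)),
      ccomp (assoc_inv h k l p q) (assoc h k l p q) e = cid (hcomp h (hcomp k l q) q1);
  assoc_nat : forall (a b c : Cell C) (e1 : ctgt a = csrc b) (e2 : ctgt b = csrc c)
      (e3 : ctgt (chcomp a b e1) = csrc c) (e4 : ctgt a = csrc (chcomp b c e2))
      (d1 : htgt (cdom a) = hsrc (cdom b)) (d2 : htgt (cdom b) = hsrc (cdom c))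
      (c1 : htgt (ccod a) = hsrc (ccod b)) (c2 : htgt (ccod b) = hsrc (ccod c))
      (x1 : ccod (chcomp (chcomp a b e1) c e3) = cdom (assoc (ccod a) (ccod b) (ccod c) c1 c2))
      (x2 : ccod (assoc (cdom a) (cdom b) (cdom c) d1 d2) = cdom (chcomp a (chcomp b c e2) e4)),
      ccomp (chcomp (chcomp a b e1) c e3) (assoc (ccod a) (ccod b) (ccod c) c1 c2) x1
      = ccomp (assoc (cdom a) (cdom b) (cdom c) d1 d2) (chcomp a (chcomp b c e2) e4) x2;
  lunit_dom : forall (h : HM C) (e : htgt (hunit (hsrc h)) = hsrc h),
      cdom (lunit h) = hcomp (hunit (hsrc h)) h e;
  lunit_cod : forall h : HM C, ccod (lunit h) = h;
  lunit_src : forall h : HM C, csrc (lunit h) = vid (hsrc h);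
  lunit_tgt : forall h : HM C, ctgt (lunit h) = vid (htgt h);
  lunit_inv_dom : forall h : HM C, cdom (lunit_inv h) = h;
  lunit_inv_cod : forall (h : HM C) (e : htgt (hunit (hsrc h)) = hsrc h),
      ccod (lunit_inv h) = hcomp (hunit (hsrc h)) h e;
  lunit_inv_src : forall h : HM C, csrc (lunit_inv h) = vid (hsrc h);
  lunit_inv_tgt : forall h : HM C, ctgt (lunit_inv h) = vid (htgt h);
  lunit_inv_l : forall (h : HM C) (e : htgt (hunit (hsrc h)) = hsrc h)
      (x : ccod (lunit h) = cdom (lunit_inv h)),
      ccomp (lunit h) (lunit_inv h) x = cid (hcomp (hunit (hsrc h)) h e);
  lunit_inv_r : forall (h : HM C) (x : ccod (lunit_inv h) = cdom (lunit h)),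
      ccomp (lunit_inv h) (lunit h) x = cid h;
  lunit_nat : forall (a : Cell C) (e1 : ctgt (cunit (csrc a)) = csrc a)
      (x1 : ccod (chcomp (cunit (csrc a)) a e1) = cdom (lunit (ccod a)))
      (x2 : ccod (lunit (cdom a)) = cdom a),
      ccomp (chcomp (cunit (csrc a)) a e1) (lunit (ccod a)) x1 = ccomp (lunit (cdom a)) a x2;
  runit_dom : forall (h : HM C) (e : htgt h = hsrc (hunit (htgt h))),
      cdom (runit h) = hcomp h (hunit (htgt h)) e;
  runit_cod : forall h : HM C, ccod (runit h) = h;
  runit_src : forall h : HM C, csrc (runit h) = vid (hsrc h);
  runit_tgt : forall h : HM C, ctgt (runit h) = vid (htgt h);
  runit_inv_dom : forall h : HM C, cdom (runit_inv h) = h;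
  runit_inv_cod : forall (h : HM C) (e : htgt h = hsrc (hunit (htgt h))),
      ccod (runit_inv h) = hcomp h (hunit (htgt h)) e;
  runit_inv_src : forall h : HM C, csrc (runit_inv h) = vid (hsrc h);
  runit_inv_tgt : forall h : HM C, ctgt (runit_inv h) = vid (htgt h);
  runit_inv_l : forall (h : HM C) (e : htgt h = hsrc (hunit (htgt h)))
      (x : ccod (runit h) = cdom (runit_inv h)),
      ccomp (runit h) (runit_inv h) x = cid (hcomp h (hunit (htgt h)) e);
  runit_inv_r : forall (h : HM C) (x : ccod (runit_inv h) = cdom (runit h)),
      ccomp (runit_inv h) (runit h) x = cid h;
  runit_nat : forall (a : Cell C) (e1 : ctgt a = csrc (cunit (ctgt a)))
      (x1 : ccod (chcomp a (cunit (ctgt a)) e1) = cdom (runit (ccod a)))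
      (x2 : ccod (runit (cdom a)) = cdom a),
      ccomp (chcomp a (cunit (ctgt a)) e1) (runit (ccod a)) x1 = ccomp (runit (cdom a)) a x2;
  pentagon : forall (h k l m : HM C) (p : htgt h = hsrc k) (q : htgt k = hsrc l) (r : htgt l = hsrc m)
      (p1 : htgt (hcomp h k p) = hsrc l) (q1 : htgt k = hsrc (hcomp l m r))
      (x1 : ccod (assoc (hcomp h k p) l m p1 r) = cdom (assoc h k (hcomp l m r) p q1))
      (y1 : ctgt (assoc h k l p q) = csrc (cid m))
      (p2 : htgt h = hsrc (hcomp k l q)) (r2 : htgt (hcomp k l q) = hsrc m)
      (y2 : ctgt (cid h) = csrc (assoc k l m q r))
      (x2 : ccod (assoc h (hcomp k l q) m p2 r2) = cdom (chcomp (cid h) (assoc k l m q r) y2))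
      (x3 : ccod (chcomp (assoc h k l p q) (cid m) y1)
            = cdom (ccomp (assoc h (hcomp k l q) m p2 r2) (chcomp (cid h) (assoc k l m q r) y2) x2)),
      ccomp (assoc (hcomp h k p) l m p1 r) (assoc h k (hcomp l m r) p q1) x1
      = ccomp (chcomp (assoc h k l p q) (cid m) y1)
          (ccomp (assoc h (hcomp k l q) m p2 r2) (chcomp (cid h) (assoc k l m q r) y2) x2) x3;
  triangle : forall (h k : HM C) (p1 : htgt h = hsrc (hunit (htgt h)))
      (p2 : htgt (hunit (htgt h)) = hsrc k)
      (y : ctgt (cid h) = csrc (lunit k))
      (x : ccod (assoc h (hunit (htgt h)) k p1 p2) = cdom (chcomp (cid h) (lunit k) y))
      (z : ctgt (runit h) = csrc (cid k)),
      ccomp (assoc h (hunit (htgt h)) k p1 p2) (chcomp (cid h) (lunit k) y) x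
      = chcomp (runit h) (cid k) z }.

Definition is_iso {C : DC} (a : Cell C) : Prop :=
  exists (b : Cell C) (e1 : ccod a = cdom b) (e2 : ccod b = cdom a),
    ccomp a b e1 = cid (cdom a) /\ ccomp b a e2 = cid (ccod a).

Record DF (C D : DC) : Type := mkDF {
  fO : Ob C -> Ob D; fV : VM C -> VM D; fH : HM C -> HM D; fC : Cell C -> Cell D;
  (* unit comparison  U_{F x} => F (U_x) *)
  fU : Ob C -> Cell D;
  (* composition comparison  F h F k => F (h k) *)
  fM : forall h k : HM C, htgt h = hsrc k -> Cell D }.

Arguments fO {C D} _ _. Arguments fV {C D} _ _. Arguments fH {C D} _ _.
Arguments fC {C D} _ _. Arguments fU {C D} _ _. Arguments fM {C D} _ _ _ _.

Record isDF {C D : DC} (F : DF C D) : Prop := {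
  fV_dom : forall f : VM C, vdom (fV F f) = fO F (vdom f);
  fV_cod : forall f : VM C, vcod (fV F f) = fO F (vcod f);
  fV_id : forall x : Ob C, fV F (vid x) = vid (fO F x);
  fV_comp : forall (f g : VM C) (e : vcod f = vdom g) (e' : vcod (fV F f) = vdom (fV F g)),
      fV F (vcomp f g e) = vcomp (fV F f) (fV F g) e';
  fC_dom : forall a : Cell C, cdom (fC F a) = fH F (cdom a);
  fC_cod : forall a : Cell C, ccod (fC F a) = fH F (ccod a);
  fC_id : forall h : HM C, fC F (cid h) = cid (fH F h);
  fC_comp : forall (a b : Cell C) (e : ccod a = cdom b) (e' : ccod (fC F a) = cdom (fC F b)),
      fC F (ccomp a b e) = ccomp (fC F a) (fC F b) e';
  fH_src : forall h : HM C, hsrc (fH F h) = fO F (hsrc h);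
  fH_tgt : forall h : HM C, htgt (fH F h) = fO F (htgt h);
  fC_src : forall a : Cell C, csrc (fC F a) = fV F (csrc a);
  fC_tgt : forall a : Cell C, ctgt (fC F a) = fV F (ctgt a);
  fU_dom : forall x : Ob C, cdom (fU F x) = hunit (fO F x);
  fU_cod : forall x : Ob C, ccod (fU F x) = fH F (hunit x);
  fU_src : forall x : Ob C, csrc (fU F x) = vid (fO F x);
  fU_tgt : forall x : Ob C, ctgt (fU F x) = vid (fO F x);
  fU_iso : forall x : Ob C, is_iso (fU F x);
  fU_nat : forall (f : VM C)
      (x1 : ccod (cunit (fV F f)) = cdom (fU F (vcod f)))
      (x2 : ccod (fU F (vdom f)) = cdom (fC F (cunit f))),
      ccomp (cunit (fV F f)) (fU F (vcod f)) x1 = ccomp (fU F (vdom f)) (fC F (cunit f)) x2;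
  fM_dom : forall (h k : HM C) (e : htgt h = hsrc k) (e' : htgt (fH F h) = hsrc (fH F k)),
      cdom (fM F h k e) = hcomp (fH F h) (fH F k) e';
  fM_cod : forall (h k : HM C) (e : htgt h = hsrc k), ccod (fM F h k e) = fH F (hcomp h k e);
  fM_src : forall (h k : HM C) (e : htgt h = hsrc k), csrc (fM F h k e) = vid (fO F (hsrc h));
  fM_tgt : forall (h k : HM C) (e : htgt h = hsrc k), ctgt (fM F h k e) = vid (fO F (htgt k));
  fM_iso : forall (h k : HM C) (e : htgt h = hsrc k), is_iso (fM F h k e);
  fM_nat : forall (a b : Cell C) (e : ctgt a = csrc b) (e' : ctgt (fC F a) = csrc (fC F b))
      (d : htgt (cdom a) = hsrc (cdom b)) (c : htgt (ccod a) = hsrc (ccod b))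
      (x1 : ccod (chcomp (fC F a) (fC F b) e') = cdom (fM F (ccod a) (ccod b) c))
      (x2 : ccod (fM F (cdom a) (cdom b) d) = cdom (fC F (chcomp a b e))),
      ccomp (chcomp (fC F a) (fC F b) e') (fM F (ccod a) (ccod b) c) x1
      = ccomp (fM F (cdom a) (cdom b) d) (fC F (chcomp a b e)) x2;
  fM_assoc : forall (h k l : HM C) (p : htgt h = hsrc k) (q : htgt k = hsrc l)
      (p' : htgt (fH F h) = hsrc (fH F k)) (q' : htgt (fH F k) = hsrc (fH F l))
      (y1 : ctgt (fM F h k p) = csrc (cid (fH F l)))
      (p1 : htgt (hcomp h k p) = hsrc l)
      (x1 : ccod (chcomp (fM F h k p) (cid (fH F l)) y1) = cdom (fM F (hcomp h k p) l p1))
      (x2 : ccod (ccomp (chcomp (fM F h k p) (cid (fH F l)) y1) (fM F (hcomp h k p) l p1) x1)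
            = cdom (fC F (assoc h k l p q)))
      (y2 : ctgt (cid (fH F h)) = csrc (fM F k l q))
      (x3 : ccod (assoc (fH F h) (fH F k) (fH F l) p' q')
            = cdom (chcomp (cid (fH F h)) (fM F k l q) y2))
      (q1 : htgt h = hsrc (hcomp k l q))
      (x4 : ccod (ccomp (assoc (fH F h) (fH F k) (fH F l) p' q')
                        (chcomp (cid (fH F h)) (fM F k l q) y2) x3)
            = cdom (fM F h (hcomp k l q) q1)),
      ccomp (ccomp (chcomp (fM F h k p) (cid (fH F l)) y1) (fM F (hcomp h k p) l p1) x1)
            (fC F (assoc h k l p q)) x2
      = ccomp (ccomp (assoc (fH F h) (fH F k) (fH F l) p' q')
                     (chcomp (cid (fH F h)) (fM F k l q) y2) x3)
              (fM F h (hcomp k l q) q1) x4;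
  fU_lunit : forall (h : HM C) (p : htgt (hunit (hsrc h)) = hsrc h)
      (y : ctgt (fU F (hsrc h)) = csrc (cid (fH F h)))
      (x1 : ccod (chcomp (fU F (hsrc h)) (cid (fH F h)) y) = cdom (fM F (hunit (hsrc h)) h p))
      (x2 : ccod (ccomp (chcomp (fU F (hsrc h)) (cid (fH F h)) y) (fM F (hunit (hsrc h)) h p) x1)
            = cdom (fC F (lunit h))),
      ccomp (ccomp (chcomp (fU F (hsrc h)) (cid (fH F h)) y) (fM F (hunit (hsrc h)) h p) x1)
            (fC F (lunit h)) x2 = lunit (fH F h);
  fU_runit : forall (h : HM C) (p : htgt h = hsrc (hunit (htgt h)))
      (y : ctgt (cid (fH F h)) = csrc (fU F (htgt h)))
      (x1 : ccod (chcomp (cid (fH F h)) (fU F (htgt h)) y) = cdom (fM F h (hunit (htgt h)) p))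
      (x2 : ccod (ccomp (chcomp (cid (fH F h)) (fU F (htgt h)) y) (fM F h (hunit (htgt h)) p) x1)
            = cdom (fC F (runit h))),
      ccomp (ccomp (chcomp (cid (fH F h)) (fU F (htgt h)) y) (fM F h (hunit (htgt h)) p) x1)
            (fC F (runit h)) x2 = runit (fH F h) }.

(* "G o H = F": equality of the composite pseudo double functor with F,
   written out componentwise (the composite has comparison cells
   G(H h) G(H k) => G(H h H k) => G(H(h k)) and similarly for units). *)
Definition DFcomp_eq {C D E : DC} (G : DF D E) (H : DF C D) (F : DF C E) : Prop :=
  (forall x : Ob C, fO G (fO H x) = fO F x) /\
  (forall f : VM C, fV G (fV H f) = fV F f) /\
  (forall h : HM C, fH G (fH H h) = fH F h) /\
  (forall a : Cell C, fC G (fC H a) = fC F a) /\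
  (forall (x : Ob C) (e : ccod (fU G (fO H x)) = cdom (fC G (fU H x))),
      ccomp (fU G (fO H x)) (fC G (fU H x)) e = fU F x) /\
  (forall (h k : HM C) (p : htgt h = hsrc k) (p' : htgt (fH H h) = hsrc (fH H k))
      (e : ccod (fM G (fH H h) (fH H k) p') = cdom (fC G (fM H h k p))),
      ccomp (fM G (fH H h) (fH H k) p') (fC G (fM H h k p)) e = fM F h k p).

Definition DF_id (C : DC) : DF C C :=
  mkDF C C (fun x => x) (fun f => f) (fun h => h) (fun a => a)
    (fun x => cid (hunit x)) (fun h k e => cid (hcomp h k e)).

Definition double_iso {C D : DC} (F : DF C D) : Prop :=
  exists G : DF D C, isDF G /\ DFcomp_eq G F (DF_id C) /\ DFcomp_eq F G (DF_id D).

Record SubDC (C : DC) : Type := {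
  sO : Ob C -> Prop; sV : VM C -> Prop; sH : HM C -> Prop; sC : Cell C -> Prop;
  s_vdom : forall f, sV f -> sO (vdom f);
  s_vcod : forall f, sV f -> sO (vcod f);
  s_vid : forall x, sO x -> sV (vid x);
  s_vcomp : forall f g (e : vcod f = vdom g), sV f -> sV g -> sV (vcomp f g e);
  s_cdom : forall a, sC a -> sH (cdom a);
  s_ccod : forall a, sC a -> sH (ccod a);
  s_cid : forall h, sH h -> sC (cid h);
  s_ccomp : forall a b (e : ccod a = cdom b), sC a -> sC b -> sC (ccomp a b e);
  s_hsrc : forall h, sH h -> sO (hsrc h);
  s_htgt : forall h, sH h -> sO (htgt h);
  s_csrc : forall a, sC a -> sV (csrc a);
  s_ctgt : forall a, sC a -> sV (ctgt a);
  s_hunit : forall x, sO x -> sH (hunit x);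
  s_cunit : forall f, sV f -> sC (cunit f);
  s_hcomp : forall h k (e : htgt h = hsrc k), sH h -> sH k -> sH (hcomp h k e);
  s_chcomp : forall a b (e : ctgt a = csrc b), sC a -> sC b -> sC (chcomp a b e);
  s_assoc : forall h k l p q, sH h -> sH k -> sH l -> sC (assoc h k l p q);
  s_assoc_inv : forall h k l p q, sH h -> sH k -> sH l -> sC (assoc_inv h k l p q);
  s_lunit : forall h, sH h -> sC (lunit h);
  s_lunit_inv : forall h, sH h -> sC (lunit_inv h);
  s_runit : forall h, sH h -> sC (runit h);
  s_runit_inv : forall h, sH h -> sC (runit_inv h) }.

Arguments sO {C} _ _. Arguments sV {C} _ _. Arguments sH {C} _ _. Arguments sC {C} _ _.

Definition complete {C : DC} (S : SubDC C) : Prop :=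
  (forall x, sO S x) /\ (forall f, sV S f) /\ (forall h, sH S h).

Definition globular {C : DC} (a : Cell C) : Prop :=
  (exists x, csrc a = vid x) /\ (exists y, ctgt a = vid y).

(* the admissible sub-double categories whose intersection is gamma C *)
Definition gadm {C : DC} (S : SubDC C) : Prop :=
  complete S /\ (forall a : Cell C, globular a -> sC S a).

Definition gammaSub (C : DC) : SubDC C.
Proof.
  refine (Build_SubDC C
    (fun x => forall S, gadm S -> sO S x) (fun f => forall S, gadm S -> sV S f)
    (fun h => forall S, gadm S -> sH S h) (fun a => forall S, gadm S -> sC S a)
    _ _ _ _ _ _ _ _ _ _ _ _ _ _ _ _ _ _ _ _ _ _);
  intros; match goal with T : SubDC C, HT : gadm _ |- _ =>
  first
  [ apply (s_vdom C T); auto | apply (s_vcod C T); auto | apply (s_vid C T); auto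
  | apply (s_vcomp C T); auto | apply (s_cdom C T); auto | apply (s_ccod C T); auto
  | apply (s_cid C T); auto | apply (s_ccomp C T); auto | apply (s_hsrc C T); auto
  | apply (s_htgt C T); auto | apply (s_csrc C T); auto | apply (s_ctgt C T); auto
  | apply (s_hunit C T); auto | apply (s_cunit C T); auto | apply (s_hcomp C T); auto
  | apply (s_chcomp C T); auto | apply (s_assoc C T); auto | apply (s_assoc_inv C T); auto
  | apply (s_lunit C T); auto | apply (s_lunit_inv C T); auto | apply (s_runit C T); auto
  | apply (s_runit_inv C T); auto ] end.
Defined.

Definition sub_DC (C : DC) (S : SubDC C) : DC :=
  mkDC
    {x : Ob C | sO S x} {f : VM C | sV S f} {h : HM C | sH S h} {a : Cell C | sC S a}
    (fun f => exist _ (vdom (proj1_sig f)) (s_vdom C S _ (proj2_sig f)))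
    (fun f => exist _ (vcod (proj1_sig f)) (s_vcod C S _ (proj2_sig f)))
    (fun x => exist _ (vid (proj1_sig x)) (s_vid C S _ (proj2_sig x)))
    (fun f g e => exist _ (vcomp (proj1_sig f) (proj1_sig g) (f_equal (@proj1_sig _ _) e))
                    (s_vcomp C S _ _ _ (proj2_sig f) (proj2_sig g)))
    (fun a => exist _ (cdom (proj1_sig a)) (s_cdom C S _ (proj2_sig a)))
    (fun a => exist _ (ccod (proj1_sig a)) (s_ccod C S _ (proj2_sig a)))
    (fun h => exist _ (cid (proj1_sig h)) (s_cid C S _ (proj2_sig h)))
    (fun a b e => exist _ (ccomp (proj1_sig a) (proj1_sig b) (f_equal (@proj1_sig _ _) e))
                    (s_ccomp C S _ _ _ (proj2_sig a) (proj2_sig b)))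
    (fun h => exist _ (hsrc (proj1_sig h)) (s_hsrc C S _ (proj2_sig h)))
    (fun h => exist _ (htgt (proj1_sig h)) (s_htgt C S _ (proj2_sig h)))
    (fun a => exist _ (csrc (proj1_sig a)) (s_csrc C S _ (proj2_sig a)))
    (fun a => exist _ (ctgt (proj1_sig a)) (s_ctgt C S _ (proj2_sig a)))
    (fun x => exist _ (hunit (proj1_sig x)) (s_hunit C S _ (proj2_sig x)))
    (fun f => exist _ (cunit (proj1_sig f)) (s_cunit C S _ (proj2_sig f)))
    (fun h k e => exist _ (hcomp (proj1_sig h) (proj1_sig k) (f_equal (@proj1_sig _ _) e))
                    (s_hcomp C S _ _ _ (proj2_sig h) (proj2_sig k)))
    (fun a b e => exist _ (chcomp (proj1_sig a) (proj1_sig b) (f_equal (@proj1_sig _ _) e))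
                    (s_chcomp C S _ _ _ (proj2_sig a) (proj2_sig b)))
    (fun h k l p q => exist _ (assoc (proj1_sig h) (proj1_sig k) (proj1_sig l)
                                 (f_equal (@proj1_sig _ _) p) (f_equal (@proj1_sig _ _) q))
                        (s_assoc C S _ _ _ _ _ (proj2_sig h) (proj2_sig k) (proj2_sig l)))
    (fun h k l p q => exist _ (assoc_inv (proj1_sig h) (proj1_sig k) (proj1_sig l)
                                 (f_equal (@proj1_sig _ _) p) (f_equal (@proj1_sig _ _) q))
                        (s_assoc_inv C S _ _ _ _ _ (proj2_sig h) (proj2_sig k) (proj2_sig l)))
    (fun h => exist _ (lunit (proj1_sig h)) (s_lunit C S _ (proj2_sig h)))
    (fun h => exist _ (lunit_inv (proj1_sig h)) (s_lunit_inv C S _ (proj2_sig h)))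
    (fun h => exist _ (runit (proj1_sig h)) (s_runit C S _ (proj2_sig h)))
    (fun h => exist _ (runit_inv (proj1_sig h)) (s_runit_inv C S _ (proj2_sig h))).

Definition gammaDC (C : DC) : DC := sub_DC C (gammaSub C).

Definition eps (C : DC) : DF (gammaDC C) C :=
  mkDF (gammaDC C) C
    (fun x => proj1_sig x) (fun f => proj1_sig f) (fun h => proj1_sig h) (fun a => proj1_sig a)
    (fun x => cid (hunit (proj1_sig x)))
    (fun h k e => cid (hcomp (proj1_sig h) (proj1_sig k) (f_equal (@proj1_sig _ _) e))).

Definition globgen (D : DC) : Prop :=
  (forall x, sO (gammaSub D) x) /\ (forall f, sV (gammaSub D) f) /\
  (forall h, sH (gammaSub D) h) /\ (forall a, sC (gammaSub D) a).

(* Main.v *)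
Require Import Defs.
From Stdlib Require Import ProofIrrelevance ClassicalEpsilon FunctionalExtensionality.

Section Tot.
Context {C : DC}.
Definition vv (f g : VM C) : VM C :=
  match excluded_middle_informative (vcod f = vdom g) with left e => vcomp f g e | right _ => f end.
Definition cc (a b : Cell C) : Cell C :=
  match excluded_middle_informative (ccod a = cdom b) with left e => ccomp a b e | right _ => a end.
Definition hh (h k : HM C) : HM C :=
  match excluded_middle_informative (htgt h = hsrc k) with left e => hcomp h k e | right _ => h end.
Definition ch (a b : Cell C) : Cell C :=
  match excluded_middle_informative (ctgt a = csrc b) with left e => chcomp a b e | right _ => a end.
Definition asc (h k l : HM C) : Cell C :=
  match excluded_middle_informative (htgt h = hsrc k) with
  | left p => match excluded_middle_informative (htgt k = hsrc l) with
     | left q => assoc h k l p q | right _ => cid h end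
  | right _ => cid h end.
Definition asci (h k l : HM C) : Cell C :=
  match excluded_middle_informative (htgt h = hsrc k) with
  | left p => match excluded_middle_informative (htgt k = hsrc l) with
     | left q => assoc_inv h k l p q | right _ => cid h end
  | right _ => cid h end.

Lemma vvE f g e : vcomp f g e = vv f g.
Proof. unfold vv; destruct excluded_middle_informative; [f_equal; apply proof_irrelevance|contradiction]. Qed.
Lemma ccE a b e : ccomp a b e = cc a b.
Proof. unfold cc; destruct excluded_middle_informative; [f_equal; apply proof_irrelevance|contradiction]. Qed.
Lemma hhE a b e : hcomp a b e = hh a b.
Proof. unfold hh; destruct excluded_middle_informative; [f_equal; apply proof_irrelevance|contradiction]. Qed.
Lemma chE a b e : chcomp a b e = ch a b.
Proof. unfold ch; destruct excluded_middle_informative; [f_equal; apply proof_irrelevance|contradiction]. Qed.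
Lemma ascE h k l p q : assoc h k l p q = asc h k l.
Proof. unfold asc; destruct excluded_middle_informative; [|contradiction].
  destruct excluded_middle_informative; [f_equal; apply proof_irrelevance|contradiction]. Qed.
Lemma asciE h k l p q : assoc_inv h k l p q = asci h k l.
Proof. unfold asci; destruct excluded_middle_informative; [|contradiction].
  destruct excluded_middle_informative; [f_equal; apply proof_irrelevance|contradiction]. Qed.
End Tot.

Definition fMt {C D : DC} (F : DF C D) (h k : HM C) : Cell D :=
  match excluded_middle_informative (htgt h = hsrc k) with left e => fM F h k e | right _ => cid (fH F h) end.
Lemma fMtE {C D : DC} (F : DF C D) h k e : fM F h k e = fMt F h k.
Proof. unfold fMt; destruct excluded_middle_informative; [f_equal; apply proof_irrelevance|contradiction]. Qed.

Ltac toT1 := match goal with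
 | |- context [vcomp ?f ?g ?e] => rewrite (vvE f g e)
 | |- context [ccomp ?a ?b ?e] => rewrite (ccE a b e)
 | |- context [hcomp ?a ?b ?e] => rewrite (hhE a b e)
 | |- context [chcomp ?a ?b ?e] => rewrite (chE a b e)
 | |- context [assoc ?h ?k ?l ?p ?q] => rewrite (ascE h k l p q)
 | |- context [assoc_inv ?h ?k ?l ?p ?q] => rewrite (asciE h k l p q)
 | |- context [fM ?F ?h ?k ?e] => rewrite (fMtE F h k e)
 end.
Ltac toT := repeat toT1.


Ltac toTin1 H := match type of H with
 | context [vcomp ?f ?g ?e] => rewrite (vvE f g e) in H
 | context [ccomp ?a ?b ?e] => rewrite (ccE a b e) in H
 | context [hcomp ?a ?b ?e] => rewrite (hhE a b e) in H
 | context [chcomp ?a ?b ?e] => rewrite (chE a b e) in H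
 | context [assoc ?h ?k ?l ?p ?q] => rewrite (ascE h k l p q) in H
 | context [assoc_inv ?h ?k ?l ?p ?q] => rewrite (asciE h k l p q) in H
 | context [fM ?F ?h ?k ?e] => rewrite (fMtE F h k e) in H
 end.
Ltac toTin H := repeat (toTin1 H).
Create HintDb dc.
Create HintDb dcH. Create HintDb dcV.
Ltac sc := first [assumption | reflexivity | (autorewrite with dc dcH; first [reflexivity | congruence])
  | (autorewrite with dc dcV; first [reflexivity | congruence])].
Tactic Notation "use" uconstr(L) := let HH := fresh "HH" in unshelve epose proof L as HH;
  [ .. | toTin HH; toT; first [exact HH | exact (eq_sym HH) ] ];
  toT; sc.

Section L.
Context {C : DC} (HC : isDC C).
Lemma vv_dom (f g : VM C) : vcod f = vdom g -> vdom (vv f g) = vdom f.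
Proof. intro e; rewrite <- (vvE f g e); apply (vcomp_dom _ HC). Qed.
Lemma vv_cod (f g : VM C) : vcod f = vdom g -> vcod (vv f g) = vcod g.
Proof. intro e; rewrite <- (vvE f g e); apply (vcomp_cod _ HC). Qed.
Lemma cc_dom (a b : Cell C) : ccod a = cdom b -> cdom (cc a b) = cdom a.
Proof. intro e; rewrite <- (ccE a b e); apply (ccomp_dom _ HC). Qed.
Lemma cc_cod (a b : Cell C) : ccod a = cdom b -> ccod (cc a b) = ccod b.
Proof. intro e; rewrite <- (ccE a b e); apply (ccomp_cod _ HC). Qed.
Lemma hh_src (h k : HM C) : htgt h = hsrc k -> hsrc (hh h k) = hsrc h.
Proof. intro e; rewrite <- (hhE h k e); apply (hsrc_hcomp _ HC). Qed.
Lemma hh_tgt (h k : HM C) : htgt h = hsrc k -> htgt (hh h k) = htgt k.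
Proof. intro e; rewrite <- (hhE h k e); apply (htgt_hcomp _ HC). Qed.
Lemma ch_src (a b : Cell C) : ctgt a = csrc b -> csrc (ch a b) = csrc a.
Proof. intro e; rewrite <- (chE a b e); apply (csrc_chcomp _ HC). Qed.
Lemma ch_tgt (a b : Cell C) : ctgt a = csrc b -> ctgt (ch a b) = ctgt b.
Proof. intro e; rewrite <- (chE a b e); apply (ctgt_chcomp _ HC). Qed.
End L.
#[export] Hint Rewrite @vv_dom @vv_cod @cc_dom @cc_cod @hh_src @hh_tgt @ch_src @ch_tgt using sc : dc.
#[export] Hint Rewrite @vid_dom @vid_cod @cid_dom @cid_cod
  @csrc_id @ctgt_id @cunit_dom @cunit_cod @hsrc_unit @htgt_unit @csrc_unit @ctgt_unit
  @lunit_cod @lunit_src @lunit_tgt @lunit_inv_dom @lunit_inv_src @lunit_inv_tgt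
  @runit_cod @runit_src @runit_tgt @runit_inv_dom @runit_inv_src @runit_inv_tgt using sc : dc.

#[export] Hint Rewrite @csrc_dom @csrc_cod @ctgt_dom @ctgt_cod using sc : dcH.
#[export] Hint Rewrite <- @csrc_dom @csrc_cod @ctgt_dom @ctgt_cod using sc : dcV.
Section L2.
Context {C : DC} (HC : isDC C).
Lemma vv_idl (f : VM C) x : vdom f = x -> vv (vid x) f = f.
Proof. intros <-. use (vcomp_idl _ HC f _). Qed.
Lemma vv_idr (f : VM C) x : vcod f = x -> vv f (vid x) = f.
Proof. intros <-. use (vcomp_idr _ HC f _). Qed.
Lemma vv_assoc (f g h : VM C) : vcod f = vdom g -> vcod g = vdom h -> vv (vv f g) h = vv f (vv g h).
Proof. intros e1 e3. use (vcomp_assoc _ HC f g h e1 _ e3 _). Qed.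
Lemma cc_idl (a : Cell C) x : cdom a = x -> cc (cid x) a = a.
Proof. intros <-. use (ccomp_idl _ HC a _). Qed.
Lemma cc_idr (a : Cell C) x : ccod a = x -> cc a (cid x) = a.
Proof. intros <-. use (ccomp_idr _ HC a _). Qed.
Lemma cc_assoc (a b c : Cell C) : ccod a = cdom b -> ccod b = cdom c -> cc (cc a b) c = cc a (cc b c).
Proof. intros e1 e3. use (ccomp_assoc _ HC a b c e1 _ e3 _). Qed.
Lemma csrc_cc (a b : Cell C) : ccod a = cdom b -> csrc (cc a b) = vv (csrc a) (csrc b).
Proof. intros e. use (csrc_comp _ HC a b e _). Qed.
Lemma ctgt_cc (a b : Cell C) : ccod a = cdom b -> ctgt (cc a b) = vv (ctgt a) (ctgt b).
Proof. intros e. use (ctgt_comp _ HC a b e _). Qed.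
Lemma cunit_vv (f g : VM C) : vcod f = vdom g -> cunit (vv f g) = cc (cunit f) (cunit g).
Proof. intros e. use (cunit_comp _ HC f g e _). Qed.
Lemma ch_dom (a b : Cell C) : ctgt a = csrc b -> cdom (ch a b) = hh (cdom a) (cdom b).
Proof. intros e. use (cdom_chcomp _ HC a b e _). Qed.
Lemma ch_cod (a b : Cell C) : ctgt a = csrc b -> ccod (ch a b) = hh (ccod a) (ccod b).
Proof. intros e. use (ccod_chcomp _ HC a b e _). Qed.
End L2.
#[export] Hint Rewrite @vv_idl @vv_idr @csrc_cc @ctgt_cc @ch_dom @ch_cod @cunit_id using sc : dc.
Section L3.
Context {C : DC} (HC : isDC C).
Lemma ch_id (h k : HM C) : htgt h = hsrc k -> ch (cid h) (cid k) = cid (hh h k).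
Proof. intros e. use (chcomp_id _ HC h k e _). Qed.
Lemma interch (a b a' b' : Cell C) : ctgt a = csrc b -> ctgt a' = csrc b' ->
  ccod a = cdom a' -> ccod b = cdom b' -> ch (cc a a') (cc b b') = cc (ch a b) (ch a' b').
Proof. intros e e' ea eb. use (interchange _ HC a b a' b' e e' ea eb _ _). Qed.
Lemma asc_dom (h k l : HM C) : htgt h = hsrc k -> htgt k = hsrc l -> cdom (asc h k l) = hh (hh h k) l.
Proof. intros p q. use (assoc_dom _ HC h k l p q _). Qed.
Lemma asc_cod (h k l : HM C) : htgt h = hsrc k -> htgt k = hsrc l -> ccod (asc h k l) = hh h (hh k l).
Proof. intros p q. use (assoc_cod _ HC h k l p q _). Qed.
Lemma asc_src (h k l : HM C) : htgt h = hsrc k -> htgt k = hsrc l -> csrc (asc h k l) = vid (hsrc h).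
Proof. intros p q. use (assoc_src _ HC h k l p q). Qed.
Lemma asc_tgt (h k l : HM C) : htgt h = hsrc k -> htgt k = hsrc l -> ctgt (asc h k l) = vid (htgt l).
Proof. intros p q. use (assoc_tgt _ HC h k l p q). Qed.
Lemma lunit_dom' (h : HM C) : cdom (lunit h) = hh (hunit (hsrc h)) h.
Proof. use (lunit_dom _ HC h _). Qed.
Lemma runit_dom' (h : HM C) : cdom (runit h) = hh h (hunit (htgt h)).
Proof. use (runit_dom _ HC h _). Qed.
End L3.
#[export] Hint Rewrite @asc_dom @asc_cod @asc_src @asc_tgt @lunit_dom' @runit_dom' using sc : dc.

#[export] Hint Rewrite @fV_dom @fV_cod @fV_id @fC_dom @fC_cod @fC_id @fH_src @fH_tgt @fC_src @fC_tgt
  @fU_dom @fU_cod @fU_src @fU_tgt using sc : dc.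
Section F.
Context {C D : DC} (HC : isDC C) (HD : isDC D) (F : DF C D) (HF : isDF F).
Lemma fV_vv (f g : VM C) : vcod f = vdom g -> fV F (vv f g) = vv (fV F f) (fV F g).
Proof. intros e. use (fV_comp _ HF f g e _). Qed.
Lemma fC_cc (a b : Cell C) : ccod a = cdom b -> fC F (cc a b) = cc (fC F a) (fC F b).
Proof. intros e. use (fC_comp _ HF a b e _). Qed.
Lemma fMt_dom (h k : HM C) : htgt h = hsrc k -> cdom (fMt F h k) = hh (fH F h) (fH F k).
Proof. intros e. use (fM_dom _ HF h k e _). Qed.
Lemma fMt_cod (h k : HM C) : htgt h = hsrc k -> ccod (fMt F h k) = fH F (hh h k).
Proof. intros e. use (fM_cod _ HF h k e). Qed.
Lemma fMt_src (h k : HM C) : htgt h = hsrc k -> csrc (fMt F h k) = vid (fO F (hsrc h)).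
Proof. intros e. use (fM_src _ HF h k e). Qed.
Lemma fMt_tgt (h k : HM C) : htgt h = hsrc k -> ctgt (fMt F h k) = vid (fO F (htgt k)).
Proof. intros e. use (fM_tgt _ HF h k e). Qed.
End F.
#[export] Hint Rewrite @fMt_dom @fMt_cod @fMt_src @fMt_tgt @fV_vv @fC_cc using sc : dc.
#[export] Hint Rewrite @fV_dom @fV_cod @fV_id @fC_dom @fC_cod @fC_id @fH_src @fH_tgt @fC_src @fC_tgt
  @fU_dom @fU_cod @fU_src @fU_tgt using sc : dc.

Section F2.
Context {C D : DC} (HC : isDC C) (HD : isDC D) (F : DF C D) (HF : isDF F).
Lemma fU_nat' (f : VM C) : cc (cunit (fV F f)) (fU F (vcod f)) = cc (fU F (vdom f)) (fC F (cunit f)).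
Proof. use (fU_nat _ HF f _ _). Qed.
Lemma fM_nat' (a b : Cell C) : ctgt a = csrc b ->
  cc (ch (fC F a) (fC F b)) (fMt F (ccod a) (ccod b)) = cc (fMt F (cdom a) (cdom b)) (fC F (ch a b)).
Proof. intros e. use (fM_nat _ HF a b e _ _ _ _ _). Qed.
Lemma fM_assoc' (h k l : HM C) : htgt h = hsrc k -> htgt k = hsrc l ->
  cc (cc (ch (fMt F h k) (cid (fH F l))) (fMt F (hh h k) l)) (fC F (asc h k l))
  = cc (cc (asc (fH F h) (fH F k) (fH F l)) (ch (cid (fH F h)) (fMt F k l))) (fMt F h (hh k l)).
Proof. intros p q. use (fM_assoc _ HF h k l p q _ _ _ _ _ _ _ _ _ _). Qed.
Lemma fU_lunit' (h : HM C) :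
  cc (cc (ch (fU F (hsrc h)) (cid (fH F h))) (fMt F (hunit (hsrc h)) h)) (fC F (lunit h)) = lunit (fH F h).
Proof. use (fU_lunit _ HF h _ _ _ _). Qed.
Lemma fU_runit' (h : HM C) :
  cc (cc (ch (cid (fH F h)) (fU F (htgt h))) (fMt F h (hunit (htgt h)))) (fC F (runit h)) = runit (fH F h).
Proof. use (fU_runit _ HF h _ _ _ _). Qed.
End F2.

Section G.
Context {C D : DC} (HC : isDC C) (HD : isDC D) (F : DF C D) (HF : isDF F).
Lemma fU_natg (f : VM C) x y : vdom f = x -> vcod f = y ->
  cc (cunit (fV F f)) (fU F y) = cc (fU F x) (fC F (cunit f)).
Proof. intros <- <-; apply (fU_nat' HC HD F HF). Qed.
Lemma fM_natg (a b : Cell C) da db ca cb : ctgt a = csrc b -> cdom a = da -> cdom b = db ->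
  ccod a = ca -> ccod b = cb ->
  cc (ch (fC F a) (fC F b)) (fMt F ca cb) = cc (fMt F da db) (fC F (ch a b)).
Proof. intros e <- <- <- <-; apply (fM_nat' HC HD F HF a b e). Qed.
End G.

Lemma isoE {C : DC} (a : Cell C) : is_iso a <-> exists b, ccod a = cdom b /\ ccod b = cdom a /\
   cc a b = cid (cdom a) /\ cc b a = cid (ccod a).
Proof. split.
- intros (b & e1 & e2 & H1 & H2). exists b. toTin H1. toTin H2. auto.
- intros (b & e1 & e2 & H1 & H2). exists b, e1, e2. toT. auto. Qed.

Section I.
Context {C : DC} (HC : isDC C).
Lemma iso_cc (a b : Cell C) : is_iso a -> is_iso b -> ccod a = cdom b -> is_iso (cc a b).
Proof. rewrite !isoE. intros (a' & e1 & e2 & H1 & H2) (b' & f1 & f2 & G1 & G2) e.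
  exists (cc b' a'). repeat split; try sc.
  - rewrite cc_assoc by sc. rewrite <- (cc_assoc HC b b' a') by sc. rewrite G1.
    rewrite (cc_idl HC) by sc. rewrite H1. f_equal. sc.
  - rewrite cc_assoc by sc. rewrite <- (cc_assoc HC a' a b) by sc. rewrite H2.
    rewrite (cc_idl HC) by sc. rewrite G2. f_equal. sc.
Qed.
End I.
Lemma iso_fC {C D : DC} (HC : isDC C) (HD : isDC D) (F : DF C D) (HF : isDF F) (a : Cell C) :
  is_iso a -> is_iso (fC F a).
Proof. rewrite !isoE. intros (a' & e1 & e2 & H1 & H2). exists (fC F a'). repeat split; try sc.
  - rewrite <- (fC_cc F HF) by sc. rewrite H1. sc.
  - rewrite <- (fC_cc F HF) by sc. rewrite H2. sc. Qed.

Definition DFc {C D E : DC} (G : DF D E) (H : DF C D) : DF C E :=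
  mkDF C E (fun x => fO G (fO H x)) (fun f => fV G (fV H f)) (fun h => fH G (fH H h))
    (fun a => fC G (fC H a)) (fun x => cc (fU G (fO H x)) (fC G (fU H x)))
    (fun h k _ => cc (fMt G (fH H h) (fH H k)) (fC G (fMt H h k))).
Lemma fMt_iso {C D : DC} (F : DF C D) (HF : isDF F) h k : htgt h = hsrc k -> is_iso (fMt F h k).
Proof. intro e. rewrite <- (fMtE F h k e). apply (fM_iso _ HF). Qed.
Section H2.
Context {C : DC} (HC : isDC C).
Lemma cc_pairR (a b a' b' r : Cell C) : cc a b = cc a' b' -> ccod a = cdom b -> ccod b = cdom r ->
  ccod a' = cdom b' -> ccod b' = cdom r -> cc a (cc b r) = cc a' (cc b' r).
Proof. intros E e1 e2 e3 e4. rewrite <- (cc_assoc HC) by sc. rewrite E. rewrite (cc_assoc HC) by sc. reflexivity. Qed.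
Lemma cc_tripR (a b c a' b' c' r : Cell C) : cc a (cc b c) = cc a' (cc b' c') ->
  ccod a = cdom b -> ccod b = cdom c -> ccod c = cdom r ->
  ccod a' = cdom b' -> ccod b' = cdom c' -> ccod c' = cdom r ->
  cc a (cc b (cc c r)) = cc a' (cc b' (cc c' r)).
Proof. intros E e1 e2 e3 e4 e5 e6. rewrite <- (cc_assoc HC b c r) by sc. rewrite <- (cc_assoc HC a) by sc.
  rewrite E. rewrite (cc_assoc HC a') by sc. rewrite (cc_assoc HC b') by sc. reflexivity. Qed.
Lemma ch_cc_idr (a b : Cell C) x : ccod a = cdom b -> ctgt a = vid (hsrc x) -> ctgt b = vid (hsrc x) ->
  ch (cc a b) (cid x) = cc (ch a (cid x)) (ch b (cid x)).
Proof. intros e1 e2 e3. rewrite <- (interch HC) by sc. rewrite (cc_idl HC (cid x) x) by sc. reflexivity. Qed.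
Lemma ch_cc_idl (a b : Cell C) x : ccod a = cdom b -> csrc a = vid (htgt x) -> csrc b = vid (htgt x) ->
  ch (cid x) (cc a b) = cc (ch (cid x) a) (ch (cid x) b).
Proof. intros e1 e2 e3. rewrite <- (interch HC) by sc. rewrite (cc_idl HC (cid x) x) by sc. reflexivity. Qed.
End H2.

Section G2.
Context {C D : DC} (HC : isDC C) (HD : isDC D) (F : DF C D) (HF : isDF F).
Lemma fM_natg_idr (a : Cell C) h da ca : ctgt a = vid (hsrc h) -> cdom a = da -> ccod a = ca ->
  cc (ch (fC F a) (cid (fH F h))) (fMt F ca h) = cc (fMt F da h) (fC F (ch a (cid h))).
Proof. intros e e1 e2. rewrite <- (fC_id _ HF). apply (fM_natg HC HD F HF); sc. Qed.
Lemma fM_natg_idl (b : Cell C) h db cb : csrc b = vid (htgt h) -> cdom b = db -> ccod b = cb ->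
  cc (ch (cid (fH F h)) (fC F b)) (fMt F h cb) = cc (fMt F h db) (fC F (ch (cid h) b)).
Proof. intros e e1 e2. rewrite <- (fC_id _ HF). apply (fM_natg HC HD F HF); sc. Qed.
Lemma fM_assocR (h k l : HM C) : htgt h = hsrc k -> htgt k = hsrc l ->
  cc (ch (fMt F h k) (cid (fH F l))) (cc (fMt F (hh h k) l) (fC F (asc h k l)))
  = cc (asc (fH F h) (fH F k) (fH F l)) (cc (ch (cid (fH F h)) (fMt F k l)) (fMt F h (hh k l))).
Proof. intros p q. rewrite <- !(cc_assoc HD) by sc. apply (fM_assoc' HC HD F HF); auto. Qed.
Lemma fU_lunitR (h : HM C) x : hsrc h = x ->
  cc (ch (fU F x) (cid (fH F h))) (cc (fMt F (hunit x) h) (fC F (lunit h))) = lunit (fH F h).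
Proof. intros <-. rewrite <- !(cc_assoc HD) by sc. apply (fU_lunit' HC HD F HF). Qed.
Lemma fU_runitR (h : HM C) x : htgt h = x ->
  cc (ch (cid (fH F h)) (fU F x)) (cc (fMt F h (hunit x)) (fC F (runit h))) = runit (fH F h).
Proof. intros <-. rewrite <- !(cc_assoc HD) by sc. apply (fU_runit' HC HD F HF). Qed.
End G2.

Section Comp.
Context {C D E : DC} (HC : isDC C) (HD : isDC D) (HE : isDC E)
  (G : DF D E) (HG : isDF G) (H : DF C D) (HH : isDF H).
Lemma DFc_isDF : isDF (DFc G H).
Proof.
constructor; intros; cbn [fO fV fH fC fU fM DFc]; toT; try sc.
- apply (iso_cc HE); [apply (fU_iso _ HG) | apply (iso_fC HD HE G HG), (fU_iso _ HH) | sc].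
- rewrite <- (cc_assoc HE) by sc.
  rewrite (fU_natg HD HE G HG (fV H f) (fO H (vdom f)) (fO H (vcod f))) by sc.
  rewrite (cc_assoc HE) by sc.
  rewrite <- (fC_cc G HG) by sc.
  rewrite (fU_natg HC HD H HH f _ _ eq_refl eq_refl).
  rewrite (fC_cc G HG) by sc. rewrite (cc_assoc HE) by sc. reflexivity.
- apply (iso_cc HE); [apply (fMt_iso G HG); sc | apply (iso_fC HD HE G HG), (fMt_iso H HH); sc | sc].
- rewrite <- (cc_assoc HE) by sc.
  rewrite (fM_natg HD HE G HG (fC H a) (fC H b) (fH H (cdom a)) (fH H (cdom b))) by sc.
  rewrite (cc_assoc HE) by sc.
  rewrite <- (fC_cc G HG) by sc.
  rewrite (fM_natg HC HD H HH a b _ _ _ _ e eq_refl eq_refl eq_refl eq_refl).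
  rewrite (fC_cc G HG) by sc. rewrite (cc_assoc HE) by sc. reflexivity.
- clear -HC HD HE HG HH p q. rewrite (ch_cc_idr HE) by sc. rewrite (ch_cc_idl HE) by sc.
  repeat rewrite (cc_assoc HE) by sc.
  rewrite (cc_pairR HE _ _ _ _ _ (fM_natg_idr HD HE G HG (fMt H h k) (fH H l) (hh (fH H h) (fH H k)) (fH H (hh h k)) ltac:(sc) ltac:(sc) ltac:(sc))) by sc.
  rewrite <- (fC_cc G HG (fMt H (hh h k) l) (fC H (asc h k l))) by sc.
  rewrite <- (fC_cc G HG (ch (fMt H h k) (cid (fH H l)))) by sc.
  rewrite (fM_assocR HC HD H HH h k l p q).
  rewrite !(fC_cc G HG) by sc.
  rewrite (cc_tripR HE _ _ _ _ _ _ _ (fM_assocR HD HE G HG (fH H h) (fH H k) (fH H l) ltac:(sc) ltac:(sc))) by sc.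
  rewrite (cc_pairR HE _ _ _ _ _ (eq_sym (fM_natg_idl HD HE G HG (fMt H k l) (fH H h) (hh (fH H k) (fH H l)) (fH H (hh k l)) ltac:(sc) ltac:(sc) ltac:(sc)))) by sc.
  reflexivity.
- clear -HC HD HE HG HH. rewrite (ch_cc_idr HE) by sc.
  repeat rewrite (cc_assoc HE) by sc.
  rewrite (cc_pairR HE _ _ _ _ _ (fM_natg_idr HD HE G HG (fU H (hsrc h)) (fH H h) (hunit (fO H (hsrc h))) (fH H (hunit (hsrc h))) ltac:(sc) ltac:(sc) ltac:(sc))) by sc.
  rewrite <- (fC_cc G HG (fMt H (hunit (hsrc h)) h) (fC H (lunit h))) by sc.
  rewrite <- (fC_cc G HG (ch (fU H (hsrc h)) (cid (fH H h)))) by sc.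
  rewrite (fU_lunitR HC HD H HH h _ eq_refl).
  apply (fU_lunitR HD HE G HG). sc.
- clear -HC HD HE HG HH. rewrite (ch_cc_idl HE) by sc.
  repeat rewrite (cc_assoc HE) by sc.
  rewrite (cc_pairR HE _ _ _ _ _ (fM_natg_idl HD HE G HG (fU H (htgt h)) (fH H h) (hunit (fO H (htgt h))) (fH H (hunit (htgt h))) ltac:(sc) ltac:(sc) ltac:(sc))) by sc.
  rewrite <- (fC_cc G HG (fMt H h (hunit (htgt h))) (fC H (runit h))) by sc.
  rewrite <- (fC_cc G HG (ch (cid (fH H h)) (fU H (htgt h)))) by sc.
  rewrite (fU_runitR HC HD H HH h _ eq_refl).
  apply (fU_runitR HD HE G HG). sc.
Qed.
End Comp.

Lemma subeq {A : Type} {P : A -> Prop} (x y : {a : A | P a}) : proj1_sig x = proj1_sig y -> x = y.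
Proof. destruct x, y; simpl; intros ->; f_equal; apply proof_irrelevance. Qed.

Lemma sub_isDC (C : DC) (HC : isDC C) (S : SubDC C) : isDC (sub_DC C S).
Proof.
destruct HC.
constructor; intros; apply subeq; cbn; eauto.
Qed.

Lemma gamma_all_O (C : DC) x : sO (gammaSub C) x.
Proof. intros S [[H _] _]; apply H. Qed.
Lemma gamma_all_V (C : DC) x : sV (gammaSub C) x.
Proof. intros S [[_ [H _]] _]; apply H. Qed.
Lemma gamma_all_H (C : DC) x : sH (gammaSub C) x.
Proof. intros S [[_ [_ H]] _]; apply H. Qed.
Lemma gamma_glob (C : DC) a : globular a -> sC (gammaSub C) a.
Proof. intros Hg S [_ H]; apply H, Hg. Qed.

Section GG.
Context (C : DC) (S' : SubDC (gammaDC C)) (HS : gadm S').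
Let P (a : Cell C) : Prop := exists x : Cell (gammaDC C), proj1_sig x = a /\ sC S' x.
Let HH := proj2 (proj2 (proj1 HS)).
Let HV := proj1 (proj2 (proj1 HS)).
Ltac fin := cbn; f_equal; apply proof_irrelevance.
Definition Tsub : SubDC C.
Proof.
  refine (Build_SubDC C (fun _ => True) (fun _ => True) (fun _ => True) P _ _ _ _ _ _ _ _ _ _ _ _ _ _ _ _ _ _ _ _ _ _);
  intros; try exact I.
  - exists (@cid (gammaDC C) (exist _ h (gamma_all_H C h))). split. reflexivity. apply s_cid, HH.
  - destruct H as [x [<- Hx]], H0 as [y [<- Hy]].
    exists (@ccomp (gammaDC C) x y (@subeq _ _ (@ccod (gammaDC C) x) (@cdom (gammaDC C) y) e)).
    split. fin. apply s_ccomp; auto.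
  - exists (@cunit (gammaDC C) (exist _ f (gamma_all_V C f))). split. reflexivity. apply s_cunit, HV.
  - destruct H as [x [<- Hx]], H0 as [y [<- Hy]].
    exists (@chcomp (gammaDC C) x y (@subeq _ _ (@ctgt (gammaDC C) x) (@csrc (gammaDC C) y) e)).
    split. fin. apply s_chcomp; auto.
  - exists (@assoc (gammaDC C) (exist _ h (gamma_all_H C h)) (exist _ k (gamma_all_H C k))
      (exist _ l (gamma_all_H C l)) (@subeq _ _ (@htgt (gammaDC C) (exist _ h (gamma_all_H C h))) (@hsrc (gammaDC C) (exist _ k (gamma_all_H C k))) p) (@subeq _ _ (@htgt (gammaDC C) (exist _ k (gamma_all_H C k))) (@hsrc (gammaDC C) (exist _ l (gamma_all_H C l))) q)).
    split. fin. apply s_assoc; apply HH.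
  - exists (@assoc_inv (gammaDC C) (exist _ h (gamma_all_H C h)) (exist _ k (gamma_all_H C k))
      (exist _ l (gamma_all_H C l)) (@subeq _ _ (@htgt (gammaDC C) (exist _ h (gamma_all_H C h))) (@hsrc (gammaDC C) (exist _ k (gamma_all_H C k))) p) (@subeq _ _ (@htgt (gammaDC C) (exist _ k (gamma_all_H C k))) (@hsrc (gammaDC C) (exist _ l (gamma_all_H C l))) q)).
    split. fin. apply s_assoc_inv; apply HH.
  - exists (@lunit (gammaDC C) (exist _ h (gamma_all_H C h))). split. reflexivity. apply s_lunit, HH.
  - exists (@lunit_inv (gammaDC C) (exist _ h (gamma_all_H C h))). split. reflexivity. apply s_lunit_inv, HH.
  - exists (@runit (gammaDC C) (exist _ h (gamma_all_H C h))). split. reflexivity. apply s_runit, HH.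
  - exists (@runit_inv (gammaDC C) (exist _ h (gamma_all_H C h))). split. reflexivity. apply s_runit_inv, HH.
Defined.

Lemma Tsub_gadm : gadm Tsub.
Proof.
  split. split; [|split]; intros; exact I.
  intros a [[x Hx] [y Hy]].
  exists (exist _ a (gamma_glob C a (conj (ex_intro _ x Hx) (ex_intro _ y Hy)))). split. reflexivity.
  apply (proj2 HS). split.
  - exists (exist _ x (gamma_all_O C x)). apply subeq. cbn. exact Hx.
  - exists (exist _ y (gamma_all_O C y)). apply subeq. cbn. exact Hy.
Qed.
End GG.

Lemma memb_aux {A : Type} (P : A -> Prop) x y : P x -> x = y -> P y.
Proof. intros H <-; exact H. Qed.

Lemma gamma_globgen (C : DC) : globgen (gammaDC C).
Proof.
  split; [|split; [|split]]; intros z S' HS.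
  - apply (proj1 (proj1 HS)).
  - apply (proj1 (proj2 (proj1 HS))).
  - apply (proj2 (proj2 (proj1 HS))).
  - destruct z as [a pa].
    destruct (pa (Tsub C S' HS) (Tsub_gadm C S' HS)) as [x [Ex Hx]].
    eapply memb_aux. exact Hx. apply subeq. exact Ex.
Qed.

Section GL.
Context (C : DC) (HC : isDC C).
Notation g := (sC (gammaSub C)).
Lemma g_cc (a b : Cell C) : g a -> g b -> ccod a = cdom b -> g (cc a b).
Proof. intros Ha Hb e. rewrite <- (ccE a b e). apply s_ccomp; auto. Qed.
Lemma g_ch (a b : Cell C) : g a -> g b -> ctgt a = csrc b -> g (ch a b).
Proof. intros Ha Hb e. rewrite <- (chE a b e). apply s_chcomp; auto. Qed.
Lemma g_cunit f : g (cunit f).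
Proof. apply s_cunit, gamma_all_V. Qed.
Lemma g_cid h : g (cid h).
Proof. apply s_cid, gamma_all_H. Qed.
Lemma glob_inv (a b : Cell C) : globular a -> ccod a = cdom b -> ccod b = cdom a ->
  cc a b = cid (cdom a) -> cc b a = cid (ccod a) -> globular b.
Proof. intros [[x Hx] [y Hy]] e1 e2 H1 H2. split.
  - exists (hsrc (ccod a)). rewrite <- (csrc_id _ HC), <- H2, (csrc_cc HC) by sc. rewrite Hx.
    symmetry; apply (vv_idr HC). rewrite (csrc_cod _ HC), e2, <- (csrc_dom _ HC), Hx. apply (vid_dom _ HC).
  - exists (htgt (ccod a)). rewrite <- (ctgt_id _ HC), <- H2, (ctgt_cc HC) by sc. rewrite Hy.
    symmetry; apply (vv_idr HC). rewrite (ctgt_cod _ HC), e2, <- (ctgt_dom _ HC), Hy. apply (vid_dom _ HC).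
Qed.
Lemma iso_inv_g (a : Cell C) : globular a -> is_iso a -> exists b, g b /\ ccod a = cdom b /\ ccod b = cdom a /\
   cc a b = cid (cdom a) /\ cc b a = cid (ccod a).
Proof. intros Hg Hi. apply isoE in Hi. destruct Hi as (b & e1 & e2 & H1 & H2). exists b.
  repeat split; auto. apply gamma_glob. eapply glob_inv; eauto. Qed.
Lemma glob_fC {D : DC} (F : DF D C) (HF : isDF F) (a : Cell D) : globular a -> globular (fC F a).
Proof. intros [[x Hx] [y Hy]]. split.
  - exists (fO F x). rewrite (fC_src _ HF), Hx. apply (fV_id _ HF).
  - exists (fO F y). rewrite (fC_tgt _ HF), Hy. apply (fV_id _ HF). Qed.
End GL.

Section Lift.
Context (C : DC) (HC : isDC C) (D : DC) (HD : isDC D) (F : DF D C) (HF : isDF F).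
Notation g := (sC (gammaSub C)).
Lemma g_glob' (a : Cell D) : globular a -> g (fC F a).
Proof. intro H. apply gamma_glob, (glob_fC C F HF), H. Qed.
Lemma glob_fU x : globular (fU F x).
Proof. split; eexists; [apply (fU_src _ HF) | apply (fU_tgt _ HF)]. Qed.
Lemma glob_fMt h k : htgt h = hsrc k -> globular (fMt F h k).
Proof. intro e. split; eexists; [apply (fMt_src F HF h k e) | apply (fMt_tgt F HF h k e)]. Qed.

Lemma g_cunitF f : g (fC F (cunit f)).
Proof.
  destruct (iso_inv_g C HC (fU F (vdom f)) (glob_fU _) (fU_iso _ HF _)) as (u & gu & e1 & e2 & H1 & H2). autorewrite with dc in e1, e2.
  assert (E : fC F (cunit f) = cc u (cc (cunit (fV F f)) (fU F (vcod f)))).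
  { rewrite (fU_nat' HD HC F HF). rewrite <- (cc_assoc HC) by sc. rewrite H2. rewrite (cc_idl HC) by sc. reflexivity. }
  rewrite E. apply (g_cc C). exact gu. apply (g_cc C). apply g_cunit. apply gamma_glob, glob_fU. all: sc.
Qed.
Lemma g_chF (a b : Cell D) : ctgt a = csrc b -> g (fC F a) -> g (fC F b) -> g (fC F (ch a b)).
Proof.
  intros e ga gb.
  destruct (iso_inv_g C HC (fMt F (cdom a) (cdom b)) (glob_fMt (cdom a) (cdom b) ltac:(sc)) (fMt_iso F HF (cdom a) (cdom b) ltac:(sc))) as (u & gu & e1 & e2 & H1 & H2). autorewrite with dc in e1, e2.
  assert (E : fC F (ch a b) = cc u (cc (ch (fC F a) (fC F b)) (fMt F (ccod a) (ccod b)))).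
  { rewrite (fM_nat' HD HC F HF a b e). rewrite <- (cc_assoc HC) by sc. rewrite H2. rewrite (cc_idl HC) by sc. reflexivity. }
  rewrite E. apply (g_cc C). exact gu. apply (g_cc C). apply (g_ch C); auto. sc.
  apply gamma_glob, glob_fMt. all: sc.
Qed.

Definition PB : SubDC D.
Proof.
  refine (Build_SubDC D (fun _ => True) (fun _ => True) (fun _ => True) (fun a => g (fC F a)) _ _ _ _ _ _ _ _ _ _ _ _ _ _ _ _ _ _ _ _ _ _);
  intros; try exact I.
  - rewrite (fC_id _ HF). apply g_cid.
  - toT. rewrite (fC_cc F HF) by sc. apply (g_cc C); auto. sc.
  - apply g_cunitF.
  - toT. apply g_chF; auto.
  - apply g_glob'. split; eexists; [apply (assoc_src _ HD) | apply (assoc_tgt _ HD)].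
  - apply g_glob'. split; eexists; [apply (assoc_inv_src _ HD) | apply (assoc_inv_tgt _ HD)].
  - apply g_glob'. split; eexists; [apply (lunit_src _ HD) | apply (lunit_tgt _ HD)].
  - apply g_glob'. split; eexists; [apply (lunit_inv_src _ HD) | apply (lunit_inv_tgt _ HD)].
  - apply g_glob'. split; eexists; [apply (runit_src _ HD) | apply (runit_tgt _ HD)].
  - apply g_glob'. split; eexists; [apply (runit_inv_src _ HD) | apply (runit_inv_tgt _ HD)].
Defined.

Lemma PB_gadm : gadm PB.
Proof. split. split; [|split]; intros; exact I. intros a Ha. apply g_glob', Ha. Qed.
End Lift.

Lemma lift_iso (C : DC) (HC : isDC C) (a : Cell (gammaDC C)) :
  globular (proj1_sig a) -> is_iso (proj1_sig a) -> is_iso a.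
Proof. intros Hg Hi. destruct (iso_inv_g C HC _ Hg Hi) as (b & gb & e1 & e2 & H1 & H2).
  exists (exist _ b gb).
  exists (@subeq _ _ (@ccod (gammaDC C) a) (@cdom (gammaDC C) (exist _ b gb)) e1).
  exists (@subeq _ _ (@ccod (gammaDC C) (exist _ b gb)) (@cdom (gammaDC C) a) e2).
  split; apply subeq; cbn; toT; assumption.
Qed.

Section Lift2.
Context (C : DC) (HC : isDC C) (D : DC) (HD : isDC D) (HGD : globgen D) (F : DF D C) (HF : isDF F).
Lemma globM h k e : globular (fM F h k e).
Proof. split; eexists; [apply (fM_src _ HF) | apply (fM_tgt _ HF)]. Qed.

Definition liftDF : DF D (gammaDC C) := mkDF D (gammaDC C)
 (fun x => exist _ (fO F x) (gamma_all_O C _))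
 (fun f => exist _ (fV F f) (gamma_all_V C _))
 (fun h => exist _ (fH F h) (gamma_all_H C _))
 (fun a => exist _ (fC F a) (proj2 (proj2 (proj2 HGD)) a (PB C HC D HD F HF) (PB_gadm C HC D HD F HF)))
 (fun x => exist _ (fU F x) (gamma_glob C _ (glob_fU C D F HF x)))
 (fun h k e => exist _ (fM F h k e) (gamma_glob C _ (globM h k e))).

Lemma liftDF_isDF : isDF liftDF.
Proof.
  pose proof HF as HF'. destruct HF'.
  constructor; intros; try (apply subeq; cbn; eauto; fail).
  - apply (lift_iso C HC). apply (glob_fU C D F HF). apply fU_iso.
  - apply (lift_iso C HC). apply globM. apply fM_iso.
Qed.

Lemma liftDF_eq : DFcomp_eq (eps C) liftDF F.
Proof.
  split; [|split; [|split; [|split; [|split]]]]; intros; cbn; try reflexivity.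
  - toT. apply (cc_idl HC). sc.
  - toT. apply (cc_idl HC). sc.
Qed.

Lemma liftDF_uniq (Ft : DF D (gammaDC C)) : isDF Ft -> DFcomp_eq (eps C) Ft F -> liftDF = Ft.
Proof.
  intros HFt (EO & EV & EH & EC & EU & EM).
  destruct Ft as [o v hm c u m]. cbn in *. unfold liftDF.
  assert (Eu : forall x, proj1_sig (u x) = fU F x).
  { intro x. pose proof (f_equal (@proj1_sig _ _) (fU_dom _ HFt x)) as Hd. cbn in Hd.
    rewrite <- (EU x (eq_trans (cid_cod _ HC _) (eq_sym Hd))). toT. symmetry. apply (cc_idl HC). exact Hd. }
  assert (Em : forall h k e, proj1_sig (m h k e) = fM F h k e).
  { intros h k e.
    assert (e' : @htgt (gammaDC C) (hm h) = @hsrc (gammaDC C) (hm k)).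
    { pose proof (f_equal (@proj1_sig _ _) (fH_src _ HFt k)) as A1; pose proof (f_equal (@proj1_sig _ _) (fH_tgt _ HFt h)) as A2; cbn in A1, A2. apply subeq; cbn. rewrite A1, A2, e. reflexivity. }
    pose proof (f_equal (@proj1_sig _ _) (fM_dom _ HFt h k e e')) as Hd. cbn in Hd.
    rewrite <- (EM h k e e' (eq_trans (cid_cod _ HC _) (eq_sym Hd))). toT. symmetry. apply (cc_idl HC). rewrite Hd. toT. reflexivity. }
  f_equal; repeat (apply functional_extensionality_dep; intro); apply subeq; cbn; auto.
Qed.
End Lift2.

Lemma iso_cid {C : DC} (HC : isDC C) (h : HM C) : is_iso (cid h).
Proof. apply isoE. exists (cid h). repeat split; try sc; rewrite (cc_idl HC) by sc; sc. Qed.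
Create HintDb dcs.
#[export] Hint Rewrite @ch_id @cc_idl @cc_idr using sc : dcs.

Lemma id_isDF (E : DC) (HE : isDC E) : isDF (DF_id E).
Proof.
  constructor; intros; cbn; toT; try sc; autorewrite with dcs; try reflexivity.
  all: try (apply (iso_cid HE)).
Qed.

Lemma eps_isDF (C : DC) (HC : isDC C) : isDF (eps C).
Proof.
  constructor; intros;
  try (pose proof (f_equal (@proj1_sig _ _) e) as E1; cbn in E1); try (pose proof (f_equal (@proj1_sig _ _) p) as E2; cbn in E2); try (pose proof (f_equal (@proj1_sig _ _) q) as E3; cbn in E3);
  cbn; toT; try sc; autorewrite with dcs; try reflexivity.
  all: try (apply (iso_cid HC)).
Qed.

Lemma id_eq {C E : DC} (HC : isDC C) (e : DF E C) (He : isDF e) : DFcomp_eq e (DF_id E) e.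
Proof.
  split; [|split; [|split; [|split; [|split]]]]; intros; cbn; try reflexivity; toT.
  - rewrite (fC_id _ He). apply (cc_idr HC). sc.
  - rewrite (fC_id _ He). apply (cc_idr HC). sc.
Qed.

Lemma eq_comp {C D E : DC} (G : DF D E) (H : DF C D) (F0 : DF C E) : DFc G H = F0 -> DFcomp_eq G H F0.
Proof.
  intros <-. split; [|split; [|split; [|split; [|split]]]]; intros; cbn; try reflexivity; toT; reflexivity.
Qed.

Section Fin.
Context (C : DC) (HC : isDC C) (E : DC) (HE : isDC E) (HgE : globgen E) (e : DF E C) (He : isDF e)
  (G : DF (gammaDC C) E) (HG : isDF G) (HG2 : DFcomp_eq e G (eps C)).
Let phi := liftDF C HC E HE HgE e He.
Let Hg := sub_isDC C HC (gammaSub C).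
Let Hphi := liftDF_isDF C HC E HE HgE e He.

Lemma phi_fMt h k : htgt h = hsrc k -> proj1_sig (fMt phi h k) = fMt e h k.
Proof. intro p. rewrite <- (fMtE phi h k p), <- (fMtE e h k p). reflexivity. Qed.

Lemma eps_fMt (h k : HM (gammaDC C)) : htgt h = hsrc k -> fMt (eps C) h k = cid (hh (proj1_sig h) (proj1_sig k)).
Proof. intro p. rewrite <- (fMtE _ h k p). cbn. toT. reflexivity. Qed.

Lemma compeq1 : DFcomp_eq e (DFc G phi) e.
Proof.
  pose proof Hg as Hg'. pose proof Hphi as Hphi'.
  destruct HG2 as (GO & GV & GH & GC & GU & GM).
  split; [|split; [|split; [|split; [|split]]]].
  - intros; apply GO.
  - intros; apply GV.
  - intros; apply GH.
  - intros; apply GC.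
  - intros x E0. cbn [fO fU fC DFc]. toT.
    rewrite (fC_cc e He) by sc. rewrite <- (cc_assoc HC) by sc.
    assert (E' : ccod (fU e (fO G (fO phi x))) = cdom (fC e (fU G (fO phi x)))) by sc.
    pose proof (GU (fO phi x) E') as GU'. toTin GU'. rewrite GU'.
    rewrite GC. cbn. apply (cc_idl HC). sc.
  - intros h k p p' E0. cbn [fO fM fH fC DFc]. toT.
    rewrite (fC_cc e He) by sc. rewrite <- (cc_assoc HC) by sc.
    assert (pp : @htgt (gammaDC C) (fH phi h) = @hsrc (gammaDC C) (fH phi k)) by sc.
    assert (pp' : htgt (fH G (fH phi h)) = hsrc (fH G (fH phi k))) by sc.
    assert (E' : ccod (fM e (fH G (fH phi h)) (fH G (fH phi k)) pp') = cdom (fC e (fM G (fH phi h) (fH phi k) pp))).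
    { toT. sc. }
    pose proof (GM (fH phi h) (fH phi k) pp pp' E') as GM'. toTin GM'. rewrite GM'.
    rewrite (eps_fMt _ _ pp). rewrite GC. change (fC (eps C) (fMt phi h k)) with (proj1_sig (fMt phi h k)). rewrite (phi_fMt h k p). apply (cc_idl HC). sc.
Qed.

Lemma compeq2 : DFcomp_eq phi G (DF_id (gammaDC C)).
Proof.
  destruct HG2 as (GO & GV & GH & GC & GU & GM).
  split; [|split; [|split; [|split; [|split]]]]; intros; apply subeq; cbn.
  - apply GO.
  - apply GV.
  - apply GH.
  - apply GC.
  - apply GU.
  - apply GM.
Qed.
End Fin.

Theorem corollary3p7 (C : DC) (HC : isDC C) :
  (* universal property of epsilon_C : gamma C -> C *)
  (forall (D : DC), isDC D -> globgen D ->
     forall F : DF D C, isDF F ->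
       exists! Ft : DF D (gammaDC C), isDF Ft /\ DFcomp_eq (eps C) Ft F)
  /\
  (* it characterizes (gamma C, epsilon_C) up to double isomorphism *)
  (forall (E : DC) (e : DF E C), isDC E -> globgen E -> isDF e ->
     (forall (D : DC), isDC D -> globgen D ->
        forall F : DF D C, isDF F ->
          exists! Ft : DF D E, isDF Ft /\ DFcomp_eq e Ft F) ->
     exists phi : DF E (gammaDC C),
       isDF phi /\ double_iso phi /\ DFcomp_eq (eps C) phi e).
Proof.
  split.
  - intros D HD HgD F HF. exists (liftDF C HC D HD HgD F HF). split.
    + split. apply liftDF_isDF. apply liftDF_eq.
    + intros Ft [HFt Heq]. apply liftDF_uniq; auto.
  - intros E e HE HgE He UP.
    destruct (UP (gammaDC C) (sub_isDC C HC (gammaSub C)) (gamma_globgen C) (eps C) (eps_isDF C HC))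
      as [G [[HG HG2] _]].
    destruct (UP E HE HgE e He) as [Ft [_ Hun]].
    assert (X : DFc G (liftDF C HC E HE HgE e He) = DF_id E).
    { rewrite <- (Hun (DFc G (liftDF C HC E HE HgE e He))), (Hun (DF_id E)); auto.
      - split. apply id_isDF; auto. apply (id_eq HC e He).
      - split. apply (DFc_isDF HE (sub_isDC C HC (gammaSub C)) HE G HG).
        apply liftDF_isDF. apply compeq1; auto. }
    exists (liftDF C HC E HE HgE e He). split. apply liftDF_isDF. split.
    + exists G. split; [exact HG|split].
      * apply eq_comp. exact X.
      * apply compeq2; auto.
    + apply liftDF_eq.
Qed.
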